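(* Let $\Pi$ be a finite simply laced diagram with labelling $\sigma:I\to V$, $I=\{1,\dots,|V|\}$, and let $\mathcal A=\{G_{ij},\phi^i_{ij}\mid i\ne j\in I\}$ be a continuous $\mathrm{SO}(2)$-amalgam with respect to $\Pi$ and $\sigma$. Then $\mathcal A$ is isomorphic (as an $\mathrm{SO}(2)$-amalgam) to the standard $\mathrm{SO}(2)$-amalgam $\mathcal A(\Pi,\sigma,\mathrm{SO}(2))$.
   Context: A simply laced diagram is a finite graph $\Pi$ with vertex set $V$ (all edges simple); a labelling is a bijection $\sigma:I\to V$. $\varepsilon_{12},\varepsilon_{23}:\mathrm{SO}(2)\to\mathrm{SO}(3)$ embed a $2\times2$ rotation matrix as the upper-left, resp. lower-right, $2\times 2$ diagonal block; $\iota_1(x)=(x,1)$, $\iota_2(x)=(1,x)$ into $\mathrm{SO}(2)\times\mathrm{SO}(2)$. An $\mathrm{SO}(2)$-amalgam with respect to $\Pi$ and $\sigma$ is a family of groups $G_{ij}$ ($i\ne j\in I$, $G_{ij}=G_{ji}$) with monomorphisms $\phi^i_{ij}:\mathrm{SO}(2)\to G_{ij}$ such that $G_{ij}=\mathrm{SO}(3)$ if $\{i^\sigma,j^\sigma\}$ is an edge and $G_{ij}=\mathrm{SO}(2)\times\mathrm{SO}(2)$ otherwise, and for $i<j$ the images satisfy $\phi^i_{ij}(\mathrm{SO}(2))=\varepsilon_{12}(\mathrm{SO}(2))$, $\phi^j_{ij}(\mathrm{SO}(2))=\varepsilon_{23}(\mathrm{SO}(2))$ in the edge case and $\phi^i_{ij}(\mathrm{SO}(2))=\iota_1(\mathrm{SO}(2))$,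 $\phi^j_{ij}(\mathrm{SO}(2))=\iota_2(\mathrm{SO}(2))$ otherwise. It is continuous if all $\phi^i_{ij}$ are continuous (Lie group topologies). The standard one $\mathcal A(\Pi,\sigma,\mathrm{SO}(2))$ has, for $i<j$, $\phi^i_{ij}=\varepsilon_{12},\phi^j_{ij}=\varepsilon_{23}$ (edge) resp. $\phi^i_{ij}=\iota_1,\phi^j_{ij}=\iota_2$ (non-edge). An isomorphism of $\mathrm{SO}(2)$-amalgams $\{G_{ij},\phi^i_{ij}\}\to\{H_{ij},\psi^i_{ij}\}$ is a permutation $\pi$ of $I$ together with group isomorphisms $\alpha_{ij}:G_{ij}\to H_{\pi(i)\pi(j)}$ such that $\alpha_{ij}\circ\phi^i_{ij}=\psi^{\pi(i)}_{\pi(i)\pi(j)}$ for all $i\ne j$. *)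

(* Defs.v *)
From Stdlib Require Import Reals.
Open Scope R_scope.

Record M2 := mkM2 { a11 : R; a12 : R; a21 : R; a22 : R }.
Record M3 := mkM3 { b11 : R; b12 : R; b13 : R; b21 : R; b22 : R; b23 : R;
                    b31 : R; b32 : R; b33 : R }.

Definition ent2 (A : M2) (i j : nat) : R :=
  match i, j with
  | 0, 0 => a11 A | 0, 1 => a12 A | 1, 0 => a21 A | 1, 1 => a22 A | _, _ => 0
  end.
Definition of2 (f : nat -> nat -> R) : M2 := mkM2 (f 0%nat 0%nat) (f 0%nat 1%nat) (f 1%nat 0%nat) (f 1%nat 1%nat).

Definition ent3 (A : M3) (i j : nat) : R :=
  match i, j with
  | 0, 0 => b11 A | 0, 1 => b12 A | 0, 2 => b13 A
  | 1, 0 => b21 A | 1, 1 => b22 A | 1, 2 => b23 A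
  | 2, 0 => b31 A | 2, 1 => b32 A | 2, 2 => b33 A
  | _, _ => 0
  end.
Definition of3 (f : nat -> nat -> R) : M3 :=
  (mkM3 (f 0 0) (f 0 1) (f 0 2) (f 1 0) (f 1 1) (f 1 2) (f 2 0) (f 2 1) (f 2 2))%nat.

Definition kron (i j : nat) : R := if Nat.eqb i j then 1 else 0.

Definition mul2 (A B : M2) : M2 :=
  of2 (fun i j => ent2 A i 0%nat * ent2 B 0%nat j + ent2 A i 1%nat * ent2 B 1%nat j).
Definition tr2 (A : M2) : M2 := of2 (fun i j => ent2 A j i).
Definition id2 : M2 := of2 kron.
Definition det2 (A : M2) : R := a11 A * a22 A - a12 A * a21 A.

Definition mul3 (A B : M3) : M3 :=
  of3 (fun i j => ent3 A i 0%nat * ent3 B 0%nat j + ent3 A i 1%nat * ent3 B 1%nat j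
                  + ent3 A i 2%nat * ent3 B 2%nat j).
Definition tr3 (A : M3) : M3 := of3 (fun i j => ent3 A j i).
Definition id3 : M3 := of3 kron.
Definition det3 (A : M3) : R :=
  b11 A * (b22 A * b33 A - b23 A * b32 A)
  - b12 A * (b21 A * b33 A - b23 A * b31 A)
  + b13 A * (b21 A * b32 A - b22 A * b31 A).

Definition SO2 (A : M2) : Prop := mul2 (tr2 A) A = id2 /\ det2 A = 1.
Definition SO3 (A : M3) : Prop := mul3 (tr3 A) A = id3 /\ det3 A = 1.

Definition eps12 (A : M2) : M3 :=
  of3 (fun i j => if (Nat.ltb i 2%nat && Nat.ltb j 2%nat)%bool then ent2 A i j
                  else kron i j).
Definition eps23 (A : M2) : M3 :=
  of3 (fun i j => if (Nat.leb 1%nat i && Nat.leb 1%nat j)%bool then ent2 A (i - 1)%nat (j - 1)%nat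
                  else kron i j).

(** * Ambient carrier for the rank-2 groups G_ij:
    [inl] for SO(3), [inr] for SO(2) x SO(2). Each G_ij is a subset [Gset b],
    with [b = true] iff the corresponding vertices are joined by an edge. *)
Definition Gcar : Type := (M3 + (M2 * M2))%type.

Definition Gset (b : bool) (g : Gcar) : Prop :=
  match g with
  | inl m => b = true /\ SO3 m
  | inr p => b = false /\ SO2 (fst p) /\ SO2 (snd p)
  end.

Definition Gmul (g h : Gcar) : Gcar :=
  match g, h with
  | inl a, inl c => inl (mul3 a c)
  | inr (a1, a2), inr (c1, c2) => inr (mul2 a1 c1, mul2 a2 c2)
  | _, _ => inl id3 (* never used: mixed products do not occur inside a G_ij *)
  end.

Definition iota1 (A : M2) : Gcar := inr (A, id2).
Definition iota2 (A : M2) : Gcar := inr (id2, A).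

Definition std_first (b : bool) (A : M2) : Gcar :=
  if b then inl (eps12 A) else iota1 A.
Definition std_second (b : bool) (A : M2) : Gcar :=
  if b then inl (eps23 A) else iota2 A.

Definition close2 (A B : M2) (d : R) : Prop :=
  forall i j, (i < 2)%nat -> (j < 2)%nat -> Rabs (ent2 A i j - ent2 B i j) < d.
Definition close3 (A B : M3) (d : R) : Prop :=
  forall i j, (i < 3)%nat -> (j < 3)%nat -> Rabs (ent3 A i j - ent3 B i j) < d.
Definition Gclose (g h : Gcar) (d : R) : Prop :=
  match g, h with
  | inl a, inl c => close3 a c d
  | inr (a1, a2), inr (c1, c2) => close2 a1 c1 d /\ close2 a2 c2 d
  | _, _ => False
  end.

Definition cont_on_SO2 (phi : M2 -> Gcar) : Prop :=
  forall x, SO2 x -> forall e, 0 < e -> exists d, 0 < d /\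
    forall y, SO2 y -> close2 x y d -> Gclose (phi x) (phi y) e.

Definition mono_SO2 (b : bool) (phi : M2 -> Gcar) : Prop :=
  (forall x, SO2 x -> Gset b (phi x)) /\
  (forall x y, SO2 x -> SO2 y -> phi (mul2 x y) = Gmul (phi x) (phi y)) /\
  (forall x y, SO2 x -> SO2 y -> phi x = phi y -> x = y).

Definition same_image (f g : M2 -> Gcar) : Prop :=
  forall h, (exists x, SO2 x /\ f x = h) <-> (exists x, SO2 x /\ g x = h).

(** The index set I = {1,...,|V|} is represented as {0,...,n-1} (order preserved).
    A simply laced diagram: a type V with a symmetric irreflexive boolean edge
    relation; the labelling sigma : I -> V is a bijection (so V is finite, |V| = n). *)
Definition simple_graph {V : Type} (edge : V -> V -> bool) : Prop :=
  (forall u v, edge u v = edge v u) /\ (forall v, edge v v = false).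

Definition labelling {V : Type} (n : nat) (sigma : nat -> V) : Prop :=
  (forall i j, (i < n)%nat -> (j < n)%nat -> sigma i = sigma j -> i = j) /\
  (forall v, exists i, (i < n)%nat /\ sigma i = v).

Definition adj {V : Type} (edge : V -> V -> bool) (sigma : nat -> V) (i j : nat) : bool :=
  edge (sigma i) (sigma j).

(** An SO(2)-amalgam: [phi i j] is phi^i_{ij} : SO(2) -> G_ij (for i <> j),
    where G_ij = G_ji is SO(3) if {sigma i, sigma j} is an edge and SO(2)xSO(2)
    otherwise; phi^j_{ij} is [phi j i]. *)
Definition SO2_amalgam {V : Type} (edge : V -> V -> bool) (n : nat) (sigma : nat -> V)
    (phi : nat -> nat -> M2 -> Gcar) : Prop :=
  forall i j, (i < n)%nat -> (j < n)%nat -> i <> j ->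
    mono_SO2 (adj edge sigma i j) (phi i j) /\
    ((i < j)%nat ->
       same_image (phi i j) (std_first (adj edge sigma i j)) /\
       same_image (phi j i) (std_second (adj edge sigma i j))).

Definition continuous_SO2_amalgam {V : Type} (edge : V -> V -> bool) (n : nat)
    (sigma : nat -> V) (phi : nat -> nat -> M2 -> Gcar) : Prop :=
  SO2_amalgam edge n sigma phi /\
  (forall i j, (i < n)%nat -> (j < n)%nat -> i <> j -> cont_on_SO2 (phi i j)).

Definition std_amalgam {V : Type} (edge : V -> V -> bool) (sigma : nat -> V)
    (i j : nat) : M2 -> Gcar :=
  if Nat.ltb i j then std_first (adj edge sigma i j)
  else std_second (adj edge sigma i j).

Definition group_iso (b c : bool) (alpha : Gcar -> Gcar) : Prop :=
  (forall g, Gset b g -> Gset c (alpha g)) /\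
  (forall g h, Gset b g -> Gset b h -> alpha (Gmul g h) = Gmul (alpha g) (alpha h)) /\
  (forall g h, Gset b g -> Gset b h -> alpha g = alpha h -> g = h) /\
  (forall k, Gset c k -> exists g, Gset b g /\ alpha g = k).

(** Isomorphism of SO(2)-amalgams (both over the same diagram and labelling):
    a permutation pi of I and isomorphisms alpha_ij : G_ij -> H_{pi i, pi j}
    (alpha_ij = alpha_ji since G_ij = G_ji) with
    alpha_ij o phi^i_ij = psi^{pi i}_{pi i, pi j}. *)
Definition amalgam_iso {V : Type} (edge : V -> V -> bool) (n : nat) (sigma : nat -> V)
    (phi psi : nat -> nat -> M2 -> Gcar) : Prop :=
  exists (pi : nat -> nat) (alpha : nat -> nat -> Gcar -> Gcar),
    (forall i, (i < n)%nat -> (pi i < n)%nat) /\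
    (forall i j, (i < n)%nat -> (j < n)%nat -> pi i = pi j -> i = j) /\
    (forall i j, (i < n)%nat -> (j < n)%nat -> i <> j ->
       alpha i j = alpha j i /\
       group_iso (adj edge sigma i j) (adj edge sigma (pi i) (pi j)) (alpha i j) /\
       (forall x, SO2 x -> alpha i j (phi i j x) = psi (pi i) (pi j) x)).

(* Main.v *)
Require Import Defs.
From Stdlib Require Import Reals Lra Lia Psatz ZArith.
Open Scope R_scope.

Lemma nat_large (r : R) : exists N : nat, r < INR N.
Proof.
  destruct (archimed r) as [H1 _].
  destruct (Z_lt_le_dec (up r) 0) as [Hz|Hz].
  - exists 0%nat. simpl. apply IZR_lt in Hz. lra.
  - exists (Z.to_nat (up r)). rewrite INR_IZR_INZ, Z2Nat.id by lia. lra.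
Qed.

Lemma cauchy (P : R -> R) (d B : R) :
  (forall a b, P (a + b) = P a + P b) -> 0 < d ->
  (forall t, Rabs t < d -> Rabs (P t) <= B) ->
  forall t, P t = P 1 * t.
Proof.
  intros Hadd Hd Hb.
  assert (P0 : P 0 = 0). { pose proof (Hadd 0 0). rewrite Rplus_0_r in H. lra. }
  assert (PN : forall x, P (- x) = - P x).
  { intros x. pose proof (Hadd x (-x)). rewrite Rplus_opp_r, P0 in H. lra. }
  assert (Pn : forall (n : nat) x, P (INR n * x) = INR n * P x).
  { induction n; intros x. simpl. rewrite Rmult_0_l, P0. ring.
    rewrite S_INR. replace ((INR n + 1) * x) with (INR n * x + x) by ring.
    rewrite Hadd, IHn. ring. }
  assert (Pz : forall (z : Z) x, P (IZR z * x) = IZR z * P x).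
  { intros z x. destruct (Z_le_gt_dec 0 z).
    - rewrite <- (Z2Nat.id z) by lia. rewrite <- INR_IZR_INZ. apply Pn.
    - replace z with (- Z.of_nat (Z.to_nat (- z)))%Z by lia.
      rewrite opp_IZR, <- INR_IZR_INZ.
      replace (- INR (Z.to_nat (- z)) * x) with (- (INR (Z.to_nat (- z)) * x)) by ring.
      rewrite PN, Pn. ring. }
  destruct (nat_large (1 / d)) as [M HM].
  assert (HMpos : 0 < INR M).
  { assert (0 < 1 / d) by (apply Rdiv_lt_0_compat; lra). lra. }
  assert (Hb1 : forall r, 0 <= r < 1 -> Rabs (P r) <= INR M * B).
  { intros r Hr.
    replace r with (INR M * (r / INR M)) by (field; lra).
    rewrite Pn, Rabs_mult, Rabs_pos_eq by lra.
    apply Rmult_le_compat_l; [lra|]. apply Hb.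
    rewrite Rabs_pos_eq by (unfold Rdiv; apply Rmult_le_pos; [lra| left; apply Rinv_0_lt_compat; lra]).
    apply Rmult_lt_reg_r with (INR M); [lra|].
    replace (r / INR M * INR M) with r by (field; lra).
    apply Rmult_lt_reg_l with (1/d). apply Rdiv_lt_0_compat; lra.
    replace (1 / d * (d * INR M)) with (INR M) by (field; lra).
    assert (1 / d * r <= 1 / d * 1).
    { apply Rmult_le_compat_l; [apply Rlt_le, Rdiv_lt_0_compat|]; lra. }
    lra. }
  intros t.
  set (g := P t - P 1 * t).
  set (C := INR M * B + Rabs (P 1)).
  assert (HN : forall N : nat, INR N * Rabs g <= C).
  { intros N.
    set (m := Int_part (INR N * t)).
    destruct (base_Int_part (INR N * t)) as [h1 h2]. fold m in h1, h2.
    set (r := INR N * t - IZR m).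
    assert (Pr : P r = INR N * P t - IZR m * P 1).
    { unfold r. unfold Rminus. rewrite Hadd.
      replace (- IZR m) with (IZR (- m) * 1) by (rewrite opp_IZR; ring).
      rewrite Pz, Pn, opp_IZR. ring. }
    assert (E : INR N * g = P r - P 1 * r).
    { rewrite Pr. unfold g, r. ring. }
    rewrite <- (Rabs_pos_eq (INR N)) by apply pos_INR.
    rewrite <- Rabs_mult, E.
    eapply Rle_trans. apply Rabs_triang.
    rewrite Rabs_Ropp. unfold C.
    apply Rplus_le_compat. apply Hb1. unfold r; lra.
    rewrite Rabs_mult. rewrite <- (Rmult_1_r (Rabs (P 1))) at 2.
    apply Rmult_le_compat_l. apply Rabs_pos.
    rewrite Rabs_pos_eq; unfold r; lra. }
  destruct (Req_dec g 0) as [Hg|Hg]. unfold g in Hg; lra.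
  exfalso.
  assert (Hga : 0 < Rabs g) by (apply Rabs_pos_lt; auto).
  destruct (nat_large (C / Rabs g)) as [N HN2].
  specialize (HN N).
  apply (Rmult_lt_compat_r (Rabs g)) in HN2; auto.
  replace (C / Rabs g * Rabs g) with C in HN2 by (field; lra). lra.
Qed.
Open Scope R_scope.

Lemma SO2_iff a b c d : SO2 (mkM2 a b c d) <-> (b = - c /\ d = a /\ a*a + c*c = 1).
Proof.
  unfold SO2, id2, mul2, tr2, of2, kron, det2; simpl. split.
  - intros [H1 H2]. injection H1; intros.
    assert (E : (b+c)*(b+c) + (d-a)*(d-a) = 0).
    { replace ((b+c)*(b+c) + (d-a)*(d-a)) with ((a*a+c*c) + (b*b+d*d) - 2*(a*d-b*c)) by ring. lra. }
    assert (E1 : (b+c)*(b+c) = 0) by nra. assert (E2 : (d-a)*(d-a) = 0) by nra.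
    apply Rmult_integral in E1; apply Rmult_integral in E2. repeat split; lra.
  - intros (-> & -> & H). split; [f_equal; nra | nra].
Qed.

Definition rot (t : R) := mkM2 (cos t) (- sin t) (sin t) (cos t).
Lemma SO2_rot t : SO2 (rot t).
Proof. apply SO2_iff. pose proof (sin2_cos2 t). unfold Rsqr in *. repeat split; lra. Qed.
Lemma rot_add a b : mul2 (rot a) (rot b) = rot (a + b).
Proof. unfold rot, mul2, of2; simpl. rewrite cos_plus, sin_plus. f_equal; ring. Qed.
Lemma rot0 : rot 0 = id2.
Proof. unfold rot, id2, of2, kron; simpl. rewrite cos_0, sin_0. f_equal; lra. Qed.

Lemma SO2_rot_ex A : SO2 A -> exists t, A = rot t.
Proof.
  destruct A as [a b c d]. intros H. apply SO2_iff in H. destruct H as (-> & -> & H).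
  assert (Ha : -1 <= a <= 1) by nra.
  destruct (Rle_dec 0 c).
  - exists (acos a). unfold rot. rewrite cos_acos, sin_acos by lra.
    assert (sqrt (1 - a²) = c). { apply Rsqr_inj; [apply sqrt_pos|lra|]. rewrite Rsqr_sqrt; unfold Rsqr in *; nra. }
    rewrite H0. reflexivity.
  - exists (- acos a). unfold rot. rewrite cos_neg, sin_neg, cos_acos, sin_acos by lra.
    assert (sqrt (1 - a²) = - c). { apply Rsqr_inj; [apply sqrt_pos|lra|]. rewrite Rsqr_sqrt; unfold Rsqr in *; nra. }
    rewrite H0. f_equal; ring.
Qed.

Definition autc (f : M2 -> M2) : Prop :=
  (forall x, SO2 x -> SO2 (f x)) /\
  (forall x y, SO2 x -> SO2 y -> f (mul2 x y) = mul2 (f x) (f y)) /\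
  (forall x y, SO2 x -> SO2 y -> f x = f y -> x = y) /\
  (forall e, 0 < e -> exists d, 0 < d /\ forall y, SO2 y -> close2 id2 y d -> close2 (f id2) (f y) e).

Lemma rot_inj_small a b : Rabs a < PI/2 -> Rabs b < PI/2 -> rot a = rot b -> a = b.
Proof.
  intros Ha Hb H. injection H; intros H1 H2 H3 H4.
  rewrite <- (asin_sin a), <- (asin_sin b) by (apply Rabs_def2 in Ha; apply Rabs_def2 in Hb; lra).
  congruence.
Qed.

Lemma pow2_pos k : 0 < 2 ^ k.
Proof. apply pow_lt; lra. Qed.

Lemma INR_lt_pow2 n : INR n < 2 ^ n.
Proof. induction n. simpl; lra. rewrite S_INR. simpl. assert (1 <= 2 ^ n) by (apply pow_R1_Rle; lra). lra. Qed.

Lemma small_more x k m d : Rabs (x / 2 ^ k) < d -> Rabs (x / 2 ^ (k + m)) < d.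
Proof.
  intros H. rewrite pow_add.
  replace (x / (2 ^ k * 2 ^ m)) with ((x / 2 ^ k) / 2 ^ m)
    by (field; split; apply Rgt_not_eq, pow2_pos).
  unfold Rdiv at 1. rewrite Rabs_mult, Rabs_inv, (Rabs_pos_eq (2^m)) by (left; apply pow2_pos).
  assert (1 <= 2 ^ m) by (apply pow_R1_Rle; lra).
  assert (0 < / 2 ^ m <= 1).
  { split. apply Rinv_0_lt_compat, pow2_pos. rewrite <- Rinv_1. apply Rinv_le_contravar; lra. }
  pose proof (Rabs_pos (x / 2 ^ k)). nra.
Qed.

Lemma local_to_global (f : M2 -> M2) (psi : R -> R) (d : R) :
  autc f -> 0 < d ->
  (forall t, Rabs t < d -> f (rot t) = rot (psi t) /\ Rabs (psi t) < PI / 6) ->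
  exists c, forall t, f (rot t) = rot (c * t).
Proof.
  intros [Hso [Hmul [Hinj _]]] Hd Hloc.
  pose proof PI_RGT_0 as Hpi.
  assert (Hadd : forall a b, Rabs a < d -> Rabs b < d -> Rabs (a + b) < d ->
                 psi (a + b) = psi a + psi b).
  { intros a b Ha Hb Hab.
    destruct (Hloc _ Ha) as [Ea Ba]. destruct (Hloc _ Hb) as [Eb Bb]. destruct (Hloc _ Hab) as [Eab Bab].
    apply rot_inj_small.
    - lra.
    - eapply Rle_lt_trans. apply Rabs_triang. lra.
    - rewrite <- Eab, <- rot_add, Hmul, Ea, Eb, rot_add by apply SO2_rot. reflexivity. }
  assert (Hhalf : forall s, Rabs s < d -> psi s = 2 * psi (s / 2)).
  { intros s Hs. replace s with (s/2 + s/2) at 1 by field.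
    assert (Rabs (s/2) < d). { unfold Rdiv. rewrite Rabs_mult, Rabs_inv, (Rabs_pos_eq 2) by lra.
      pose proof (Rabs_pos s). lra. }
    rewrite Hadd; auto. ring. replace (s/2+s/2) with s by field. auto. }
  assert (Hscale : forall t k m, Rabs (t / 2 ^ k) < d ->
            2 ^ (k + m) * psi (t / 2 ^ (k + m)) = 2 ^ k * psi (t / 2 ^ k)).
  { intros t k m Hk. induction m.
    - rewrite Nat.add_0_r. reflexivity.
    - rewrite <- IHm. rewrite Nat.add_succ_r. simpl pow.
      rewrite (Hhalf (t / 2 ^ (k + m))) by (apply small_more; auto).
      replace (t / (2 * 2 ^ (k + m))) with (t / 2 ^ (k + m) / 2)
        by (field; apply Rgt_not_eq, pow2_pos). ring. }
  set (N := fun t => Z.to_nat (up (Rabs t / d))).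
  assert (HN : forall t, Rabs (t / 2 ^ (N t)) < d).
  { intros t. unfold Rdiv at 1. rewrite Rabs_mult, Rabs_inv, (Rabs_pos_eq (2 ^ N t)) by (left; apply pow2_pos).
    destruct (archimed (Rabs t / d)) as [h1 _].
    assert (0 <= Rabs t / d) by (unfold Rdiv; apply Rmult_le_pos; [apply Rabs_pos| left; apply Rinv_0_lt_compat; lra]).
    assert (Hup : (0 < up (Rabs t / d))%Z) by (apply lt_IZR; lra).
    assert (INR (N t) = IZR (up (Rabs t / d))) by (unfold N; rewrite INR_IZR_INZ, Z2Nat.id by lia; reflexivity).
    pose proof (INR_lt_pow2 (N t)). pose proof (pow2_pos (N t)).
    apply Rmult_lt_reg_r with (2 ^ N t); auto.
    rewrite Rmult_assoc, Rinv_l, Rmult_1_r by lra.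
    apply Rmult_lt_reg_l with (/ d). apply Rinv_0_lt_compat; lra.
    rewrite <- Rmult_assoc, Rinv_l, Rmult_1_l by lra.
    unfold Rdiv in h1. rewrite Rmult_comm. lra. }
  set (Phi := fun t => 2 ^ (N t) * psi (t / 2 ^ (N t))).
  assert (HPhi : forall t k, Rabs (t / 2 ^ k) < d -> Phi t = 2 ^ k * psi (t / 2 ^ k)).
  { intros t k Hk. unfold Phi.
    rewrite <- (Hscale t (N t) k (HN t)), <- (Hscale t k (N t) Hk), Nat.add_comm. reflexivity. }
  assert (HPadd : forall a b, Phi (a + b) = Phi a + Phi b).
  { intros a b. set (k := (N a + N b + N (a + b)%R)%nat).
    assert (Ka : Rabs (a / 2 ^ k) < d) by (unfold k; rewrite <- Nat.add_assoc; apply small_more, HN).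
    assert (Kb : Rabs (b / 2 ^ k) < d).
    { unfold k. replace (N a + N b + N (a + b)%R)%nat with (N b + (N a + N (a+b)%R))%nat by lia. apply small_more, HN. }
    assert (Kab : Rabs ((a + b) / 2 ^ k) < d).
    { unfold k. replace (N a + N b + N (a + b)%R)%nat with (N (a+b)%R + (N a + N b))%nat by lia. apply small_more, HN. }
    rewrite (HPhi _ k Ka), (HPhi _ k Kb), (HPhi _ k Kab).
    replace ((a + b) / 2 ^ k) with (a / 2 ^ k + b / 2 ^ k) in * by (field; apply Rgt_not_eq, pow2_pos).
    rewrite Hadd; auto. ring. }
  assert (HProt : forall k t, Rabs (t / 2 ^ k) < d -> f (rot t) = rot (2 ^ k * psi (t / 2 ^ k))).
  { induction k; intros t Ht.
    - simpl in *. replace (t / 1) with t in * by field. rewrite Rmult_1_l. apply Hloc; auto.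
    - replace t with (t / 2 + t / 2) at 1 by field.
      rewrite <- rot_add, Hmul by apply SO2_rot.
      assert (Ht2 : Rabs (t / 2 / 2 ^ k) < d).
      { replace (t / 2 / 2 ^ k) with (t / 2 ^ S k) by (simpl; field; apply Rgt_not_eq, pow2_pos). auto. }
      rewrite (IHk _ Ht2), rot_add.
      replace (t / 2 / 2 ^ k) with (t / 2 ^ S k) by (simpl; field; apply Rgt_not_eq, pow2_pos).
      f_equal. simpl. ring. }
  assert (Hbound : forall t, Rabs t < d -> Rabs (Phi t) <= PI / 6).
  { intros t Ht. assert (Ht' : Rabs (t / 2 ^ 0) < d) by (simpl; replace (t/1) with t by field; auto).
    rewrite (HPhi t 0%nat Ht'). simpl. replace (t/1) with t by field. rewrite Rmult_1_l.
    left; apply Hloc; auto. }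
  exists (Phi 1). intros t.
  rewrite <- (cauchy Phi d (PI/6) HPadd Hd Hbound t).
  rewrite (HProt (N t) t (HN t)). reflexivity.
Qed.

Lemma SO2_form A : SO2 A -> A = mkM2 (a11 A) (- a21 A) (a21 A) (a11 A) /\ a11 A * a11 A + a21 A * a21 A = 1.
Proof.
  destruct A as [a b c d]. intros H. apply SO2_iff in H. destruct H as (-> & -> & H). simpl. auto.
Qed.

Lemma mul2_id : mul2 id2 id2 = id2.
Proof. unfold mul2, id2, of2, kron; simpl. f_equal; ring. Qed.

Lemma sin_abs_le t : Rabs (sin t) <= Rabs t.
Proof.
  assert (Hp : forall t, 0 <= t -> Rabs (sin t) <= t).
  { intros x Hx. destruct (Req_dec x 0) as [->|Hx0]. rewrite sin_0, Rabs_R0; lra.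
    pose proof (sin_lt_x x ltac:(lra)). pose proof (SIN_bound x). pose proof PI_RGT_0.
    destruct (Rle_dec x PI).
    - pose proof (sin_ge_0 x Hx r). rewrite Rabs_pos_eq; lra.
    - pose proof PI2_1. apply Rabs_le; lra. }
  destruct (Rle_dec 0 t). rewrite (Rabs_pos_eq t) by lra. auto.
  rewrite <- (Ropp_involutive t), sin_neg, Rabs_Ropp, Rabs_Ropp. rewrite (Rabs_pos_eq (- t)) by lra. apply Hp. lra.
Qed.

Lemma cos_close t : Rabs (cos t - 1) <= Rabs t.
Proof.
  replace t with (2 * (t / 2)) at 1 by field. rewrite cos_2a_sin.
  pose proof (sin_abs_le (t / 2)). pose proof (SIN_bound (t/2)).
  replace (1 - 2 * sin (t / 2) * sin (t / 2) - 1) with (- (2 * (sin (t/2) * sin (t/2)))) by ring.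
  rewrite Rabs_Ropp, Rabs_mult, Rabs_mult, (Rabs_pos_eq 2) by lra.
  assert (Rabs (t/2) = Rabs t / 2). { unfold Rdiv. rewrite Rabs_mult, Rabs_inv, (Rabs_pos_eq 2) by lra. reflexivity. }
  assert (Rabs (sin (t/2)) <= 1) by (apply Rabs_le; lra).
  pose proof (Rabs_pos (sin (t/2))). nra.
Qed.

Lemma rot_eq_id a : rot a = id2 -> exists k : Z, a = 2 * IZR k * PI.
Proof.
  unfold rot, id2, of2, kron; simpl. intros H. injection H; intros _ _ _ Hc.
  replace a with (2 * (a / 2)) in Hc by field. rewrite cos_2a_sin in Hc.
  assert (sin (a/2) * sin (a/2) = 0) by lra. apply Rmult_integral in H0.
  assert (sin (a/2) = 0) by (destruct H0; auto).
  destruct (sin_eq_0_0 _ H1) as [k Hk]. exists k. lra.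
Qed.

Lemma rot_2PI : rot (2 * PI) = id2.
Proof. unfold rot, id2, of2, kron; simpl. rewrite cos_2PI, sin_2PI. f_equal; lra. Qed.

Lemma rot_PI_ne : rot PI <> id2.
Proof. unfold rot, id2, of2, kron; simpl. rewrite cos_PI. intros H; injection H; intros; lra. Qed.

Lemma auto_SO2 (f : M2 -> M2) : autc f ->
  (forall x, SO2 x -> f x = x) \/ (forall x, SO2 x -> f x = tr2 x).
Proof.
  intros Hf. pose proof Hf as [Hso [Hmul [Hinj Hcont]]].
  pose proof PI_RGT_0 as Hpi.
  assert (Hid : f id2 = id2).
  { assert (SO2 id2) by (rewrite <- rot0; apply SO2_rot).
    pose proof (Hmul id2 id2 H H). rewrite mul2_id in H0.
    destruct (SO2_form _ (Hso _ H)) as [E N].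
    set (a := a11 (f id2)) in *. set (c := a21 (f id2)) in *.
    rewrite E in H0 at 2 3. rewrite E. unfold mul2, of2 in H0; simpl in H0.
    rewrite E in H0. injection H0; intros e1 e2 e3 e4.
    assert (Hc : c = 0).
    { assert (c * (2 * a - 1) = 0) by nra. apply Rmult_integral in H1. destruct H1; auto.
      assert (a = 1/2) by lra. nra. }
    assert (a = 1) by (rewrite Hc in *; nra).
    rewrite Hc, H1. unfold id2, of2, kron; simpl. f_equal; lra. }
  destruct (Hcont (1/2) ltac:(lra)) as [dl [Hdl Hdc]].
  set (d := Rmin dl 1).
  assert (Hd : 0 < d) by (unfold d; apply Rmin_pos; lra).
  set (psi := fun t => asin (a21 (f (rot t)))).
  assert (Hloc : forall t, Rabs t < d -> f (rot t) = rot (psi t) /\ Rabs (psi t) < PI / 6).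
  { intros t Ht.
    assert (Htd : Rabs t < dl) by (pose proof (Rmin_l dl 1); unfold d in Ht; lra).
    assert (Hcl : close2 id2 (rot t) dl).
    { intros i j Hi Hj. pose proof (sin_abs_le t). pose proof (cos_close t).
      destruct i as [|[|i]]; destruct j as [|[|j]]; try lia; unfold id2, rot, of2, kron; simpl.
      - rewrite <- Rabs_Ropp. replace (- (1 - cos t)) with (cos t - 1) by ring. lra.
      - replace (0 - - sin t) with (sin t) by ring. lra.
      - rewrite <- Rabs_Ropp. replace (- (0 - sin t)) with (sin t) by ring. lra.
      - rewrite <- Rabs_Ropp. replace (- (1 - cos t)) with (cos t - 1) by ring. lra. }
    pose proof (Hdc _ (SO2_rot t) Hcl) as Hc2. rewrite Hid in Hc2.
    destruct (SO2_form _ (Hso _ (SO2_rot t))) as [E N].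
    unfold psi. set (a := a11 (f (rot t))) in *. set (c := a21 (f (rot t))) in *.
    pose proof (Hc2 0%nat 0%nat ltac:(lia) ltac:(lia)) as h00.
    pose proof (Hc2 1%nat 0%nat ltac:(lia) ltac:(lia)) as h10.
    rewrite E in h00, h10. unfold id2, of2, kron in h00, h10; simpl in h00, h10.
    apply Rabs_def2 in h00. apply Rabs_def2 in h10.
    assert (Hc1 : -1 <= c <= 1) by lra.
    split.
    - rewrite E. unfold rot. rewrite sin_asin, cos_asin by lra.
      assert (sqrt (1 - c²) = a).
      { apply Rsqr_inj; [apply sqrt_pos|lra|]. rewrite Rsqr_sqrt; unfold Rsqr in *; nra. }
      rewrite H. reflexivity.
    - pose proof (asin_bound c). pose proof (sin_asin c Hc1). rewrite <- sin_PI6 in h10.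
      apply Rabs_def1.
      + destruct (Rlt_le_dec (asin c) (PI/6)) as [h|h]; auto. exfalso.
        destruct (Rle_lt_or_eq_dec _ _ h) as [h'|h'].
        * pose proof (sin_increasing_1 (PI/6) (asin c) ltac:(lra) ltac:(lra) ltac:(lra) ltac:(lra) h'). lra.
        * rewrite <- h' in H0. lra.
      + destruct (Rlt_le_dec (- (PI/6)) (asin c)) as [h|h]; auto. exfalso.
        destruct (Rle_lt_or_eq_dec _ _ h) as [h'|h'].
        * pose proof (sin_increasing_1 (asin c) (- (PI/6)) ltac:(lra) ltac:(lra) ltac:(lra) ltac:(lra) h').
          rewrite sin_neg in H1. lra.
        * rewrite h', sin_neg in H0. lra. }
  destruct (local_to_global f psi d Hf Hd Hloc) as [c Hc].
  assert (HSid : SO2 id2) by (rewrite <- rot0; apply SO2_rot).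
  assert (Hk : exists k : Z, c = IZR k).
  { pose proof (Hc (2 * PI)). rewrite rot_2PI, Hid in H.
    destruct (rot_eq_id (c * (2 * PI))) as [k Hk]. auto. exists k.
    apply Rmult_eq_reg_r with (2 * PI). lra. lra. }
  destruct Hk as [k Hk].
  assert (Hk1 : c = 1 \/ c = -1).
  { destruct (Z.eq_dec k 0) as [->|Hk0].
    - exfalso. apply rot_PI_ne. apply Hinj; auto. apply SO2_rot.
      rewrite Hc, Hk, Hid, Rmult_0_l, rot0. reflexivity.
    - assert (Hcn : c <> 0) by (rewrite Hk; apply not_0_IZR; auto).
      assert (rot (2 * PI / c) = id2).
      { apply Hinj; auto. apply SO2_rot. rewrite Hc, Hid.
        replace (c * (2 * PI / c)) with (2 * PI) by (field; auto). apply rot_2PI. }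
      destruct (rot_eq_id _ H) as [k' Hk'].
      assert (IZR (k * k') = 1).
      { rewrite mult_IZR, <- Hk.
        apply Rmult_eq_reg_r with (2 * PI); [|lra].
        replace (c * IZR k' * (2 * PI)) with (c * (2 * IZR k' * PI)) by ring.
        rewrite <- Hk'. field. auto. }
      apply eq_IZR in H0. apply Z.eq_mul_1 in H0. rewrite Hk.
      destruct H0 as [->| ->]; [left|right]; reflexivity. }
  destruct Hk1 as [H1|H1]; [left|right]; intros x Hx; destruct (SO2_rot_ex x Hx) as [t ->];
    rewrite Hc, H1.
  - rewrite Rmult_1_l. reflexivity.
  - unfold rot, tr2, of2; simpl. replace (-1 * t) with (- t) by ring.
    rewrite cos_neg, sin_neg. f_equal; ring.
Qed.

Definition ext12 (m : M3) : M2 := mkM2 (b11 m) (b12 m) (b21 m) (b22 m).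
Definition ext23 (m : M3) : M2 := mkM2 (b22 m) (b23 m) (b32 m) (b33 m).
Definition extA (g : Gcar) : M2 := match g with inl m => ext12 m | inr (p, _) => p end.
Definition extB (g : Gcar) : M2 := match g with inl m => ext23 m | inr (_, q) => q end.

Lemma extA_std b x : extA (std_first b x) = x.
Proof. destruct b, x; reflexivity. Qed.
Lemma extB_std b x : extB (std_second b x) = x.
Proof. destruct b, x; reflexivity. Qed.

Lemma mul_std_first b x y : Gmul (std_first b x) (std_first b y) = std_first b (mul2 x y).
Proof.
  destruct b; simpl.
  - destruct x, y. unfold eps12, mul3, mul2, of3, of2, kron; simpl. f_equal. f_equal; ring.
  - unfold iota1. rewrite mul2_id. reflexivity.
Qed.
Lemma mul_std_second b x y : Gmul (std_second b x) (std_second b y) = std_second b (mul2 x y).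
Proof.
  destruct b; simpl.
  - destruct x, y. unfold eps23, mul3, mul2, of3, of2, kron; simpl. f_equal. f_equal; ring.
  - unfold iota2. rewrite mul2_id. reflexivity.
Qed.

Lemma close_std_first b x y e : Gclose (std_first b x) (std_first b y) e -> close2 x y e.
Proof.
  destruct b; simpl.
  - intros H i j Hi Hj. specialize (H i j ltac:(lia) ltac:(lia)).
    destruct i as [|[|i]]; destruct j as [|[|j]]; try lia; exact H.
  - intros [H _]. exact H.
Qed.
Lemma close_std_second b x y e : Gclose (std_second b x) (std_second b y) e -> close2 x y e.
Proof.
  destruct b; simpl.
  - intros H i j Hi Hj. specialize (H (S i) (S j) ltac:(lia) ltac:(lia)).
    destruct i as [|[|i]]; destruct j as [|[|j]]; try lia; exact H.
  - intros [_ H]. exact H.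
Qed.

Lemma factor b (std : M2 -> Gcar) (ext : Gcar -> M2) (phi : M2 -> Gcar) :
  (forall x, ext (std x) = x) ->
  (forall x y, Gmul (std x) (std y) = std (mul2 x y)) ->
  (forall x y e, Gclose (std x) (std y) e -> close2 x y e) ->
  mono_SO2 b phi -> same_image phi std -> cont_on_SO2 phi ->
  (forall x, SO2 x -> phi x = std x) \/ (forall x, SO2 x -> phi x = std (tr2 x)).
Proof.
  intros Hext Hmul Hcl [_ [Hm Hinj]] Him Hcont.
  assert (Hf : forall x, SO2 x -> phi x = std (ext (phi x)) /\ SO2 (ext (phi x))).
  { intros x Hx. destruct (proj1 (Him (phi x)) (ex_intro _ x (conj Hx eq_refl))) as [y [Hy E]].
    rewrite <- E, Hext. auto. }
  assert (HA : autc (fun x => ext (phi x))).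
  { split; [|split; [|split]].
    - intros x Hx. apply Hf; auto.
    - intros x y Hx Hy. rewrite Hm by auto. rewrite (proj1 (Hf x Hx)), (proj1 (Hf y Hy)) at 1.
      rewrite Hmul, Hext. reflexivity.
    - intros x y Hx Hy E. apply Hinj; auto. rewrite (proj1 (Hf x Hx)), (proj1 (Hf y Hy)), E. reflexivity.
    - intros e He. assert (Hid : SO2 id2) by (rewrite <- rot0; apply SO2_rot).
      destruct (Hcont id2 Hid e He) as [d [Hd Hc]]. exists d. split; auto.
      intros y Hy Hcl2. apply Hcl. rewrite <- (proj1 (Hf _ Hid)), <- (proj1 (Hf _ Hy)). auto. }
  destruct (auto_SO2 _ HA) as [H|H]; [left|right]; intros x Hx;
    rewrite (proj1 (Hf x Hx)), H; auto.
Qed.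

Definition sg (u w : R) (i : nat) : R := match i with 0%nat => u | 1%nat => 1 | _ => w end.
Definition dconj (u w : R) (m : M3) : M3 := of3 (fun i j => sg u w i * sg u w j * ent3 m i j).
Definition Jm : M2 := mkM2 0 (-1) 1 0.
Lemma SO2_J : SO2 Jm.
Proof. apply SO2_iff. repeat split; lra. Qed.

Definition sign1 (u : R) := u = 1 \/ u = -1.

Lemma dconj_SO3 u w m : sign1 u -> sign1 w -> SO3 m -> SO3 (dconj u w m).
Proof.
  intros Hu Hw. destruct m.
  unfold SO3, dconj, id3, mul3, tr3, of3, kron, det3, sg; simpl.
  intros [H1 H2]. injection H1; intros.
  destruct Hu as [-> | ->]; destruct Hw as [-> | ->]; split; try (f_equal; lra); lra.
Qed.

Lemma dconj_mul u w m n : sign1 u -> sign1 w -> dconj u w (mul3 m n) = mul3 (dconj u w m) (dconj u w n).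
Proof.
  intros Hu Hw. destruct m, n.
  unfold dconj, mul3, of3, sg; simpl.
  destruct Hu as [-> | ->]; destruct Hw as [-> | ->]; f_equal; ring.
Qed.

Lemma dconj_inv u w m : sign1 u -> sign1 w -> dconj u w (dconj u w m) = m.
Proof.
  intros Hu Hw. destruct m.
  unfold dconj, of3, sg; simpl.
  destruct Hu as [-> | ->]; destruct Hw as [-> | ->]; f_equal; ring.
Qed.

Definition Aiso' (p1 p2 : M2 -> Gcar) (g : Gcar) : Gcar :=
  match g with
  | inl m => inl (dconj (a21 (extA (p1 Jm))) (a21 (extB (p2 Jm))) m)
  | inr (p, q) => inr (extA (p1 p), extB (p2 q))
  end.

Lemma tr2_SO2 x : SO2 x -> SO2 (tr2 x).
Proof.
  intros H. destruct (SO2_form x H) as [E N]. rewrite E. apply SO2_iff. simpl. repeat split; lra.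
Qed.
Lemma tr2_tr2 x : tr2 (tr2 x) = x.
Proof. destruct x; reflexivity. Qed.
Lemma tr2_id : tr2 id2 = id2.
Proof. reflexivity. Qed.
Lemma tr2_mul x y : SO2 x -> SO2 y -> tr2 (mul2 x y) = mul2 (tr2 x) (tr2 y).
Proof.
  intros Hx Hy. destruct (SO2_form x Hx) as [E _]. destruct (SO2_form y Hy) as [F _].
  rewrite E, F. unfold tr2, mul2, of2; simpl. f_equal; ring.
Qed.

Definition tw (s : bool) (x : M2) : M2 := if s then x else tr2 x.
Lemma tw_SO2 s x : SO2 x -> SO2 (tw s x).
Proof. destruct s; simpl; auto using tr2_SO2. Qed.
Lemma tw_tw s x : tw s (tw s x) = x.
Proof. destruct s; simpl; auto using tr2_tr2. Qed.
Lemma tw_id s : tw s id2 = id2.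
Proof. destruct s; reflexivity. Qed.
Lemma tw_mul s x y : SO2 x -> SO2 y -> tw s (mul2 x y) = mul2 (tw s x) (tw s y).
Proof. destruct s; simpl; auto using tr2_mul. Qed.

Lemma factor_first b p : mono_SO2 b p -> same_image p (std_first b) -> cont_on_SO2 p ->
  exists s, forall x, SO2 x -> p x = std_first b (tw s x).
Proof.
  intros H1 H2 H3. destruct (factor b (std_first b) extA p (extA_std b) (mul_std_first b)
    (close_std_first b) H1 H2 H3) as [H|H]; [exists true|exists false]; exact H.
Qed.
Lemma factor_second b p : mono_SO2 b p -> same_image p (std_second b) -> cont_on_SO2 p ->
  exists s, forall x, SO2 x -> p x = std_second b (tw s x).
Proof.
  intros H1 H2 H3. destruct (factor b (std_second b) extB p (extB_std b) (mul_std_second b)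
    (close_std_second b) H1 H2 H3) as [H|H]; [exists true|exists false]; exact H.
Qed.

Definition sgnb (s : bool) : R := if s then 1 else -1.
Lemma sign_sgnb s : sign1 (sgnb s).
Proof. destruct s; [left|right]; reflexivity. Qed.

Lemma SO2_mul_ok x y : SO2 x -> SO2 y -> SO2 (mul2 x y).
Proof.
  intros Hx Hy. destruct (SO2_rot_ex x Hx) as [a ->]. destruct (SO2_rot_ex y Hy) as [b ->].
  rewrite rot_add. apply SO2_rot.
Qed.

Lemma pair_ok b p1 p2 :
  mono_SO2 b p1 -> mono_SO2 b p2 ->
  same_image p1 (std_first b) -> same_image p2 (std_second b) ->
  cont_on_SO2 p1 -> cont_on_SO2 p2 ->
  group_iso b b (Aiso' p1 p2) /\
  (forall x, SO2 x -> Aiso' p1 p2 (p1 x) = std_first b x) /\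
  (forall x, SO2 x -> Aiso' p1 p2 (p2 x) = std_second b x).
Proof.
  intros M1 M2 S1 S2 C1 C2.
  destruct (factor_first b p1 M1 S1 C1) as [s1 E1].
  destruct (factor_second b p2 M2 S2 C2) as [s2 E2].
  assert (A1 : forall x, SO2 x -> extA (p1 x) = tw s1 x) by (intros; rewrite E1, extA_std; auto).
  assert (A2 : forall x, SO2 x -> extB (p2 x) = tw s2 x) by (intros; rewrite E2, extB_std; auto).
  assert (U : a21 (extA (p1 Jm)) = sgnb s1) by (rewrite A1 by apply SO2_J; destruct s1; reflexivity).
  assert (W : a21 (extB (p2 Jm)) = sgnb s2) by (rewrite A2 by apply SO2_J; destruct s2; reflexivity).
  pose proof (sign_sgnb s1) as su. pose proof (sign_sgnb s2) as sw.
  destruct b.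
  - split; [|split].
    + split; [|split; [|split]].
      * intros [m|[p q]] [Hb1 Hm]; [|discriminate]. cbn [Aiso']. rewrite U, W. split; auto. apply dconj_SO3; auto.
      * intros [m|[p q]] [n|[p' q']] [Hb1 Hm] [Hb2 Hn]; try discriminate. cbn [Aiso' Gmul]. rewrite U, W.
        rewrite dconj_mul; auto.
      * intros [m|[p q]] [n|[p' q']] [Hb1 Hm] [Hb2 Hn]; try discriminate. cbn [Aiso' Gmul]. rewrite U, W.
        intros E. pose proof (f_equal (fun g => match g with inl x => x | inr _ => id3 end) E) as E'. cbv beta iota in E'.
        assert (m = n) by (rewrite <- (dconj_inv _ _ m su sw), E', dconj_inv; auto). subst; reflexivity.
      * intros [m|[p q]] [Hb1 Hm]; [|discriminate]. exists (inl (dconj (sgnb s1) (sgnb s2) m)).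
        split. split; auto. apply dconj_SO3; auto.
        simpl. rewrite U, W, dconj_inv; auto.
    + intros x Hx. rewrite E1 by auto. simpl. rewrite U, W. f_equal.
      destruct (SO2_form x Hx) as [Ex _]. rewrite Ex.
      destruct s1, s2; unfold tw, tr2, eps12, dconj, of2, of3, sgnb, sg, kron; simpl; f_equal; ring.
    + intros x Hx. rewrite E2 by auto. simpl. rewrite U, W. f_equal.
      destruct (SO2_form x Hx) as [Ex _]. rewrite Ex.
      destruct s1, s2; unfold tw, tr2, eps23, dconj, of2, of3, sgnb, sg, kron; simpl; f_equal; ring.
  - split; [|split].
    + split; [|split; [|split]].
      * intros [m|[p q]] [Hf Hpq]; [discriminate|]. simpl in Hpq |- *. rewrite A1, A2 by tauto.
        split; auto. simpl. split; apply tw_SO2; tauto.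
      * intros [m|[p q]] [n|[p' q']] [Hb1 Hm] [Hb2 Hn]; try discriminate. simpl in *.
        rewrite !A1, !A2 by (tauto || apply SO2_mul_ok; tauto).
        rewrite !tw_mul by tauto. reflexivity.
      * intros [m|[p q]] [n|[p' q']] [Hb1 Hm] [Hb2 Hn]; try discriminate. simpl in *.
        rewrite !A1, !A2 by tauto. intros E. injection E; intros Eq Ep.
        rewrite <- (tw_tw s1 p), <- (tw_tw s2 q), Ep, Eq, !tw_tw. reflexivity.
      * intros [m|[p q]] [Hf Hpq]; [discriminate|]. simpl in Hpq.
        exists (inr (tw s1 p, tw s2 q)). split.
        simpl. split; auto. split; apply tw_SO2; tauto.
        simpl. rewrite A1, A2 by (apply tw_SO2; tauto). rewrite !tw_tw. reflexivity.
    + intros x Hx. rewrite E1 by auto. simpl. unfold iota1.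
      assert (Hid : SO2 id2) by (rewrite <- rot0; apply SO2_rot).
      rewrite A1, A2 by (auto using tw_SO2). rewrite tw_tw, tw_id. reflexivity.
    + intros x Hx. rewrite E2 by auto. simpl. unfold iota2.
      assert (Hid : SO2 id2) by (rewrite <- rot0; apply SO2_rot).
      rewrite A1, A2 by (auto using tw_SO2). rewrite tw_tw, tw_id. reflexivity.
Qed.

Definition Aiso (phi : nat -> nat -> M2 -> Gcar) (i j : nat) : Gcar -> Gcar :=
  Aiso' (phi (Nat.min i j) (Nat.max i j)) (phi (Nat.max i j) (Nat.min i j)).

Theorem mainTheorem4 (V : Type) (edge : V -> V -> bool) (n : nat) (sigma : nat -> V)
    (phi : nat -> nat -> M2 -> Gcar) :
  simple_graph edge ->
  labelling n sigma ->
  continuous_SO2_amalgam edge n sigma phi ->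
  amalgam_iso edge n sigma phi (std_amalgam edge sigma).
Proof.
  intros [Hsym _] _ [Ham Hcont].
  exists (fun i => i), (Aiso phi).
  split; [auto|split; [auto|]].
  intros i j Hi Hj Hij.
  assert (Hadj : adj edge sigma j i = adj edge sigma i j) by (unfold adj; apply Hsym).
  split.
  { unfold Aiso. rewrite Nat.min_comm, Nat.max_comm. reflexivity. }
  destruct (Nat.lt_gt_cases i j) as [[Hlt|Hgt] _]; [lia| |].
  - destruct (Ham i j Hi Hj Hij) as [M1 [S1 S2]]; [lia|].
    destruct (Ham j i Hj Hi (not_eq_sym Hij)) as [M2 _]. rewrite Hadj in M2.
    destruct (pair_ok _ _ _ M1 M2 S1 S2 (Hcont i j Hi Hj Hij) (Hcont j i Hj Hi (not_eq_sym Hij)))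
      as [G [C1 _]].
    unfold Aiso. rewrite Nat.min_l, Nat.max_r by lia.
    split; auto.
    intros x Hx. rewrite C1 by auto. unfold std_amalgam.
    replace (Nat.ltb i j) with true by (symmetry; apply Nat.ltb_lt; lia). reflexivity.
  - destruct (Ham j i Hj Hi (not_eq_sym Hij)) as [M1 [S1 S2]]; [lia|].
    destruct (Ham i j Hi Hj Hij) as [M2 _]. rewrite Hadj in M1, S1, S2.
    destruct (pair_ok _ _ _ M1 M2 S1 S2 (Hcont j i Hj Hi (not_eq_sym Hij)) (Hcont i j Hi Hj Hij))
      as [G [_ C2]].
    unfold Aiso. rewrite Nat.min_r, Nat.max_l by lia.
    split; auto.
    intros x Hx. rewrite C2 by auto. unfold std_amalgam.
    replace (Nat.ltb i j) with false by (symmetry; apply Nat.ltb_ge; lia). reflexivity.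
Qed.
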